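(* For all $n\in\mathbb N$ the following hold in the $q$-shuffle algebra $\mathbb V$: $$W_{-n}=\sum_{i=0}^n(-1)^iq^i(xC_i)\star\tilde G_{n-i}=\sum_{i=0}^n(-1)^iq^{-i}\tilde G_{n-i}\star(xC_i),$$ $$W_{n+1}=\sum_{i=0}^n(-1)^iq^i\tilde G_{n-i}\star(C_iy)=\sum_{i=0}^n(-1)^iq^{-i}(C_iy)\star\tilde G_{n-i}.$$ Here $xC_i$ and $C_iy$ are concatenation products.
   Context: Let $\mathbb F$ be a field and let $q\in\mathbb F$ be nonzero and not a root of unity. Let $[m]_q=(q^m-q^{-m})/(q-q^{-1})$. Let $\mathbb V$ be the free associative $\mathbb F$-algebra on noncommuting $x,y$, with basis the words (including $1$). Juxtaposition denotes concatenation. Set $\langle x,x\rangle=\langle y,y\rangle=2$ and $\langle x,y\rangle=\langle y,x\rangle=-2$. The $q$-shuffle product $\star$ is the bilinear product determined as follows: - $1\star v=v\star 1=v$; - for nontrivial words $u=u_1\cdots u_r$ and $v=v_1\cdots v_s$, $$u\star v=u_1((u_2\cdots u_r)\star v)+v_1(u\star(v_2\cdots v_s))q^{\langle u_1,v_1\rangle+\cdots+\langle u_r,v_1\rangle}.$$ This makes $\mathbb V$ an associative algebra, the $q$-shuffle algebra. For $k\in\mathbb N$: - $W_{-k}=xyx\cdots x$ is the alternating word of length $2k+1$ beginning and ending with $x$; - $W_{k+1}=yxy\cdots y$ is the alternating word of length $2k+1$ beginning and ending with $y$; - $\tilde G_k=xyxy\cdots xy$ is the word of length $2k$, with $\tilde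 G_0=1$. Let $\overline x=1$ and $\overline y=-1$. A word $v_1\cdots v_m$ is Catalan if $\overline v_1+\cdots+\overline v_i\ge0$ for $1\le i\le m-1$ and $\overline v_1+\cdots+\overline v_m=0$. For $n\in\mathbb N$, $$C_n=\sum v_1\cdots v_{2n}\,[1]_q[1+\overline v_1]_q\cdots[1+\overline v_1+\cdots+\overline v_{2n}]_q,$$ where the sum is over all Catalan words of length $2n$ (so $C_0=1$). *)

(* Defs.v *)
From HB Require Import structures.
From mathcomp Require Import all_boot all_order all_algebra.
Set Implicit Arguments. Unset Strict Implicit. Unset Printing Implicit Defensive.
Import Order.TTheory GRing.Theory Num.Theory.
Local Open Scope ring_scope.

(* Letters: x = true, y = false.  Words are sequences of letters; the empty
   word [::] is the unit 1.  An element of the free algebra V over F is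
   represented by a formal linear combination (a finite list of
   (coefficient, word) pairs); two representations denote the same element
   of V iff they have the same coefficient function [vcoef]. *)
Definition word := seq bool.
Definition V (F : fieldType) := seq (F * word).

Section QShuffle.
Variable F : fieldType.
Variable q : F.

Definition vcoef (v : V F) (w : word) : F :=
  \sum_(p <- v) (if p.2 == w then p.1 else 0).

Definition veq (u v : V F) : Prop := forall w, vcoef u w = vcoef v w.

Definition vword (w : word) : V F := [:: (1, w)].
Definition vscale (c : F) (v : V F) : V F := [seq (c * p.1, p.2) | p <- v].
Definition vadd (u v : V F) : V F := u ++ v.
Definition vcat (u v : V F) : V F :=
  [seq (a.1 * b.1, a.2 ++ b.2) | a <- u, b <- v].

Definition lform (a b : bool) : int := if a == b then 2 else -2.

Fixpoint shw (u v : word) {struct u} : V F :=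
  let fix shv (v : word) : V F :=
    match u, v with
    | [::], _ => [:: (1, v)]
    | _, [::] => [:: (1, u)]
    | a :: u', b :: v' =>
        [seq (p.1, a :: p.2) | p <- shw u' v] ++
        [seq (p.1 * q ^ (\sum_(c <- u) lform c b), b :: p.2) | p <- shv v']
    end in shv v.

Definition vshuffle (U W : V F) : V F :=
  flatten [seq [seq (a.1 * b.1 * e.1, e.2) | e <- shw a.2 b.2]
          | a <- U, b <- W].

Definition qint (m : int) : F := (q ^ m - q ^ (- m)) / (q - q^-1).

Definition lbar (a : bool) : int := if a then 1 else -1.
Definition psum (w : word) : int := \sum_(a <- w) lbar a.

Definition catalan (w : word) : bool :=
  all (fun i => 0 <= psum (take i w)) (iota 1 (size w).-1) && (psum w == 0).

Fixpoint words (m : nat) : seq word :=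
  if m is m'.+1 then [seq b :: w | b <- [:: true; false], w <- words m']
  else [:: [::]].

Definition catcoef (w : word) : F :=
  \prod_(i < (size w).+1) qint (1 + psum (take i w)).

Definition Cn (n : nat) : V F :=
  [seq (catcoef w, w) | w <- words (2 * n) & catalan w].

(* W_{-k} = xyx...x (length 2k+1), W_{k+1} = yxy...y, G~_k = xyxy...xy (length 2k) *)
Definition Wneg (k : nat) : word := mkseq (fun i => ~~ odd i) (2 * k).+1.
Definition Wpos (k : nat) : word := mkseq (fun i => odd i) (2 * k).+1.
Definition Gt (k : nat) : word := mkseq (fun i => ~~ odd i) (2 * k).

Definition vsum (n : nat) (f : nat -> V F) : V F :=
  \big[vadd/[::]]_(i < n) f i.

End QShuffle.

(* Main.v *)
Require Import Defs.
From HB Require Import structures.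
From mathcomp Require Import all_boot all_order all_algebra.
From mathcomp Require Import ring zify.
From Stdlib Require Import FunctionalExtensionality.
Import Order.TTheory GRing.Theory Num.Theory.
Local Open Scope ring_scope.
Set Implicit Arguments. Unset Strict Implicit. Unset Printing Implicit Defensive.

Section Core.
Variable F : fieldType.
Variable q : F.

Definition fn := word -> F.
Definition dd (a : bool) (f : fn) : fn := fun w => f (a :: w).
Definition wt (u : word) (b : bool) : int := \sum_(c <- u) lform c b.
Definition KK (b : bool) (f : fn) : fn := fun u => q ^ (wt u b) * f u.
Definition zerof : fn := fun _ => 0.
Definition scalef (k : F) (f : fn) : fn := fun u => k * f u.
Definition addf (f g : fn) : fn := fun u => f u + g u.
Definition delta (u : word) : fn := fun z => if u == z then 1 else 0.

Fixpoint sh (w : word) (f g : fn) : F :=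
  match w with
  | [::] => f [::] * g [::]
  | a :: w' => sh w' (dd a f) g + sh w' (KK a f) (dd a g)
  end.

Lemma sh_cons a w f g : sh (a :: w) f g = sh w (dd a f) g + sh w (KK a f) (dd a g).
Proof. by []. Qed.

Lemma dd_zero a : dd a zerof = zerof. Proof. by []. Qed.
Lemma KK_zero a : KK a zerof = zerof.
Proof. by apply: functional_extensionality => u; rewrite /KK /zerof mulr0. Qed.
Lemma dd_scale a k f : dd a (scalef k f) = scalef k (dd a f). Proof. by []. Qed.
Lemma KK_scale a k f : KK a (scalef k f) = scalef k (KK a f).
Proof. by apply: functional_extensionality => u; rewrite /KK /scalef mulrCA. Qed.
Lemma dd_add a f g : dd a (addf f g) = addf (dd a f) (dd a g). Proof. by []. Qed.
Lemma KK_add a f g : KK a (addf f g) = addf (KK a f) (KK a g).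
Proof. by apply: functional_extensionality => u; rewrite /KK /addf mulrDr. Qed.

Lemma sh0l w g : sh w zerof g = 0.
Proof.
elim: w g => [|a w IH] g /=; first by rewrite /zerof mul0r.
by rewrite dd_zero KK_zero !IH addr0.
Qed.

Lemma sh0r w f : sh w f zerof = 0.
Proof.
elim: w f => [|a w IH] f /=; first by rewrite /zerof mulr0.
by rewrite dd_zero !IH addr0.
Qed.

Lemma shZl w k f g : sh w (scalef k f) g = k * sh w f g.
Proof.
elim: w f g => [|a w IH] f g /=; first by rewrite /scalef mulrA.
by rewrite dd_scale KK_scale !IH mulrDr.
Qed.

Lemma shZr w k f g : sh w f (scalef k g) = k * sh w f g.
Proof.
elim: w f g => [|a w IH] f g /=; first by rewrite /scalef mulrCA.
by rewrite dd_scale !IH mulrDr.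
Qed.

Lemma shDl w f1 f2 g : sh w (addf f1 f2) g = sh w f1 g + sh w f2 g.
Proof.
elim: w f1 f2 g => [|a w IH] f1 f2 g /=; first by rewrite /addf mulrDl.
rewrite dd_add KK_add !IH; ring.
Qed.

Lemma shDr w f g1 g2 : sh w f (addf g1 g2) = sh w f g1 + sh w f g2.
Proof.
elim: w f g1 g2 => [|a w IH] f g1 g2 /=; first by rewrite /addf mulrDr.
rewrite dd_add !IH; ring.
Qed.

Lemma sh_suml (I : Type) (r : seq I) (Fi : I -> fn) w g :
  sh w (fun z => \sum_(i <- r) Fi i z) g = \sum_(i <- r) sh w (Fi i) g.
Proof.
elim: r => [|i r IH].
  have -> : (fun z => \sum_(i <- [::]) Fi i z) = zerof.
    by apply: functional_extensionality => z; rewrite big_nil.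
  by rewrite sh0l big_nil.
have -> : (fun z => \sum_(i0 <- i :: r) Fi i0 z) = addf (Fi i) (fun z => \sum_(i0 <- r) Fi i0 z).
  by apply: functional_extensionality => z; rewrite big_cons.
by rewrite shDl IH big_cons.
Qed.

Lemma sh_sumr (I : Type) (r : seq I) (Gi : I -> fn) w f :
  sh w f (fun z => \sum_(i <- r) Gi i z) = \sum_(i <- r) sh w f (Gi i).
Proof.
elim: r => [|i r IH].
  have -> : (fun z => \sum_(i <- [::]) Gi i z) = zerof.
    by apply: functional_extensionality => z; rewrite big_nil.
  by rewrite sh0r big_nil.
have -> : (fun z => \sum_(i0 <- i :: r) Gi i0 z) = addf (Gi i) (fun z => \sum_(i0 <- r) Gi i0 z).
  by apply: functional_extensionality => z; rewrite big_cons.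
by rewrite shDr IH big_cons.
Qed.

Lemma wt_nil b : wt [::] b = 0. Proof. by rewrite /wt big_nil. Qed.

Lemma sh_delta0_l w g : sh w (delta [::]) g = g w.
Proof.
elim: w g => [|a w IH] g /=; first by rewrite /delta eqxx mul1r.
have -> : dd a (delta [::]) = zerof by [].
have -> : KK a (delta [::]) = delta [::].
  apply: functional_extensionality => u; rewrite /KK /delta.
  by case: u => [|c u]; rewrite ?wt_nil ?expr0z ?mul1r ?mulr0.
by rewrite sh0l add0r IH.
Qed.

Lemma sh_delta0_r w f : sh w f (delta [::]) = f w.
Proof.
elim: w f => [|a w IH] f /=; first by rewrite /delta eqxx mulr1.
have -> : dd a (delta [::]) = zerof by [].
by rewrite sh0r addr0 IH.
Qed.

End Core.

Section Bridge.
Variable F : fieldType.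
Variable q : F.

Lemma vcoef_nil w : vcoef ([::] : V F) w = 0.
Proof. by rewrite /vcoef big_nil. Qed.

Lemma vcoef_cat (s1 s2 : V F) w : vcoef (s1 ++ s2) w = vcoef s1 w + vcoef s2 w.
Proof. by rewrite /vcoef big_cat. Qed.

Lemma vcoef_vword u : vcoef (vword F u) = delta F u.
Proof.
apply: functional_extensionality => z.
by rewrite /vcoef /vword big_cons big_nil addr0 /delta.
Qed.

Lemma vcoef_mapc (s : V F) a w :
  vcoef [seq (p.1, a :: p.2) | p <- s] w =
  match w with [::] => 0 | c :: w' => if a == c then vcoef s w' else 0 end.
Proof.
rewrite /vcoef big_map; case: w => [|c w'].
  by rewrite big1.
case: eqP => [<-|ne].
  by apply: eq_bigr => p _; rewrite /= eqseq_cons eqxx.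
by rewrite big1 // => p _; rewrite /= eqseq_cons; case: eqP.
Qed.

Lemma vcoef_mapck (s : V F) a (k : F) w :
  vcoef [seq (p.1 * k, a :: p.2) | p <- s] w =
  match w with [::] => 0 | c :: w' => if a == c then vcoef s w' * k else 0 end.
Proof.
rewrite /vcoef big_map; case: w => [|c w'].
  by rewrite big1.
case: eqP => [<-|ne].
  rewrite mulr_suml; apply: eq_bigr => p _; rewrite /= eqseq_cons eqxx /=.
  by case: ifP; rewrite ?mul0r.
by rewrite big1 // => p _; rewrite /= eqseq_cons; case: eqP.
Qed.

Lemma vcoef_mapk (s : V F) (k : F) w :
  vcoef [seq (k * e.1, e.2) | e <- s] w = k * vcoef s w.
Proof.
rewrite /vcoef big_map mulr_sumr; apply: eq_bigr => p _ /=.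
by case: ifP; rewrite ?mulr0.
Qed.

Lemma vcoef_scale (c : F) (v : V F) w : vcoef (vscale c v) w = c * vcoef v w.
Proof. exact: vcoef_mapk. Qed.

Lemma vcoef_vsum n (f : nat -> V F) w :
  vcoef (vsum n f) w = \sum_(i < n) vcoef (f i) w.
Proof.
rewrite /vsum; elim: (index_enum _) => [|i r IH].
  by rewrite !big_nil vcoef_nil.
by rewrite !big_cons /vadd vcoef_cat IH.
Qed.

Lemma shw_nil_l v : shw q [::] v = [:: (1, v)].
Proof. by case: v. Qed.

Lemma shw_nil_r a u : shw q (a :: u) [::] = [:: (1, a :: u)].
Proof. by []. Qed.

Lemma shw_cons a u b v : shw q (a :: u) (b :: v) =
  [seq (p.1, a :: p.2) | p <- shw q u (b :: v)] ++
  [seq (p.1 * q ^ (\sum_(c <- a :: u) lform c b), b :: p.2) | p <- shw q (a :: u) v].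
Proof. by []. Qed.

Lemma dd_delta_cons c a u :
  dd c (delta F (a :: u)) = if a == c then delta F u else zerof F.
Proof.
apply: functional_extensionality => z; rewrite /dd /delta eqseq_cons.
by case: (a == c).
Qed.

Lemma KK_delta c u : KK q c (delta F u) = scalef (q ^ (wt u c)) (delta F u).
Proof.
apply: functional_extensionality => z; rewrite /KK /scalef /delta.
by case: eqP => [->|]; rewrite ?mulr0.
Qed.

Lemma shw_coef w u v : vcoef (shw q u v) w = sh q w (delta F u) (delta F v).
Proof.
elim: w u v => [|c w IH] u v.
  case: u => [|a u]; first by rewrite shw_nil_l sh_delta0_l -vcoef_vword.
  case: v => [|b v].
    by rewrite shw_nil_r sh_delta0_r -vcoef_vword.
  by rewrite shw_cons vcoef_cat vcoef_mapc vcoef_mapck /= /delta mul0r addr0.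
case: u => [|a u].
  by rewrite shw_nil_l sh_delta0_l -vcoef_vword.
case: v => [|b v].
  by rewrite shw_nil_r sh_delta0_r -vcoef_vword.
rewrite shw_cons vcoef_cat vcoef_mapc vcoef_mapck sh_cons !IH.
rewrite dd_delta_cons KK_delta dd_delta_cons shZl.
case: (a == c); last rewrite sh0l.
all: case: eqP => [<-|_]; last by rewrite sh0r ?mulr0.
all: by rewrite /wt mulrC.
Qed.

Lemma vcoef_delta_sum (U : V F) :
  vcoef U = (fun z => \sum_(a <- U) scalef a.1 (delta F a.2) z).
Proof.
apply: functional_extensionality => z; rewrite /vcoef; apply: eq_bigr => p _.
by rewrite /scalef /delta eq_sym; case: ifP; rewrite ?mulr1 ?mulr0.
Qed.

Lemma vcoef_flatten (L : seq (V F)) w :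
  vcoef (flatten L) w = \sum_(l <- L) vcoef l w.
Proof.
elim: L => [|l L IH]; first by rewrite big_nil vcoef_nil.
by rewrite /= vcoef_cat IH big_cons.
Qed.

Lemma vcoef_shuffle (U W : V F) w :
  vcoef (vshuffle q U W) w = sh q w (vcoef U) (vcoef W).
Proof.
rewrite /vshuffle vcoef_flatten.
rewrite (big_allpairs_dep (op := +%R) (idx := 0)
   (h := fun a b => [seq (a.1 * b.1 * e.1, e.2) | e <- shw q a.2 b.2])
   (r2 := fun _ => W) (F := fun l => vcoef l w)) /=.
rewrite (vcoef_delta_sum U) sh_suml; apply: eq_bigr => a _.
rewrite (vcoef_delta_sum W) sh_sumr; apply: eq_bigr => b _.
rewrite (vcoef_mapk _ (a.1 * b.1)) shw_coef.
have -> : [eta scalef a.1 (delta F a.2)] = scalef a.1 (delta F a.2) by [].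
rewrite shZl shZr; ring.
Qed.

End Bridge.

Section Cat.
Variable F : fieldType.

Definition pre (a : bool) (f : fn F) : fn F := fun z =>
  match z with c :: z' => if c == a then f z' else 0 | [::] => 0 end.
Definition post (b : bool) (f : fn F) : fn F := fun z =>
  match rev z with c :: r => if c == b then f (rev r) else 0 | [::] => 0 end.

Lemma vcoef_vcat_l a (U : V F) : vcoef (vcat (vword F [:: a]) U) = pre a (vcoef U).
Proof.
apply: functional_extensionality => z.
rewrite /vcoef /vcat.
rewrite (big_allpairs_dep (op := +%R) (idx := 0)
   (h := fun x y => (x.1 * y.1, x.2 ++ y.2)) (r2 := fun _ => U)
   (F := fun p => if p.2 == z then p.1 else 0)) /=.
rewrite big_cons big_nil addr0 /pre; case: z => [|c z].
  by rewrite big1.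
rewrite eq_sym; case: eqP => [->|ne] /=.
  by apply: eq_bigr => p _; rewrite eqseq_cons eqxx mul1r.
by rewrite big1 // => p _; rewrite eqseq_cons; case: eqP.
Qed.

Lemma vcoef_vcat_r b (U : V F) : vcoef (vcat U (vword F [:: b])) = post b (vcoef U).
Proof.
apply: functional_extensionality => z.
rewrite /vcoef /vcat.
rewrite (big_allpairs_dep (op := +%R) (idx := 0)
   (h := fun x y => (x.1 * y.1, x.2 ++ y.2)) (r2 := fun _ => vword F [:: b])
   (F := fun p => if p.2 == z then p.1 else 0)) /=.
rewrite /post; case Hz: (rev z) => [|c r].
  apply: big1 => p _; rewrite big_cons big_nil addr0 /=.
  have -> : (p.2 ++ [:: b] == z) = false.
    apply/negbTE/negP => /eqP E; move: Hz; rewrite -E cats1 rev_rcons //.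
  by [].
have Ez : z = rcons (rev r) c by rewrite -rev_cons -Hz revK.
case E: (c == b).
  move/eqP: E => E; subst c.
  apply: eq_bigr => p _; rewrite big_cons big_nil addr0 /= mulr1 Ez cats1.
  by rewrite eqseq_rcons eqxx andbT.
rewrite big1 // => p _; rewrite big_cons big_nil addr0 /= Ez cats1.
by rewrite eqseq_rcons [b == c]eq_sym E andbF.
Qed.

End Cat.

Section Fam.
Variable F : fieldType.
Variable q : F.

Definition qn (n : nat) : F := qint q (n%:Z).

Lemma qnE n : qn n = (q ^+ n - (q ^+ n)^-1) / (q - q^-1).
Proof. by rewrite /qn /qint exprnN. Qed.

Fixpoint Q (s : F) (h : nat) (w : word) : F :=
  match w with
  | [::] => (h == 0)%:R
  | true :: w' => qn h.+2 * Q s h.+1 w'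
  | false :: w' => if h is h'.+1 then s * qn h * Q s h' w' else 0
  end.

Fixpoint altb (a : bool) (w : word) : bool :=
  match w with [::] => true | c :: w' => (c == a) && altb (~~ a) w' end.
Definition ind (a p : bool) : fn F := fun w =>
  if altb a w && (odd (size w) == p) then 1 else 0.

Definition Af := ind true false.
Definition Bf := ind false false.
Definition Wnf := ind true true.
Definition Wpf := ind false true.
Definition Sf s h := post false (Q s h).

Lemma ind_cons a p c w : ind a p (c :: w) = if c == a then ind (~~ a) (~~ p) w else 0.
Proof.
rewrite /ind /=; case: (c == a) => //=.
by case: (altb _ _) => //=; case: (odd _); case: p.
Qed.

Lemma dd_ind a p c : dd c (ind a p) = if c == a then ind (~~ a) (~~ p) else zerof F.
Proof.
apply: functional_extensionality => z; rewrite /dd ind_cons.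
by case: (c == a).
Qed.

Lemma dQ_t s h : dd true (Q s h) = scalef (qn h.+2) (Q s h.+1). Proof. by []. Qed.
Lemma dQ_f0 s : dd false (Q s 0) = zerof F.
Proof. by apply: functional_extensionality. Qed.
Lemma dQ_fS s h : dd false (Q s h.+1) = scalef (s * qn h.+1) (Q s h).
Proof. by []. Qed.

Lemma dd_pre_same a (f : fn F) : dd a (pre a f) = f.
Proof. by apply: functional_extensionality => z; rewrite /dd /pre eqxx. Qed.
Lemma dd_pre_diff a c (f : fn F) : c != a -> dd c (pre a f) = zerof F.
Proof. by move=> ne; apply: functional_extensionality => z; rewrite /dd /pre (negbTE ne). Qed.

Lemma post_scale b k (f : fn F) : post b (scalef k f) = scalef k (post b f).
Proof.
apply: functional_extensionality => z; rewrite /post /scalef.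
by case: (rev z) => [|c r]; rewrite ?mulr0 //; case: (c == b); rewrite ?mulr0.
Qed.
Lemma post_zero b : post b (zerof F) = zerof F.
Proof.
apply: functional_extensionality => z; rewrite /post /zerof.
by case: (rev z) => [|c r] //; case: (c == b).
Qed.

Lemma dd_post c b (f : fn F) z : dd c (post b f) z =
  post b (dd c f) z + (if (z == [::]) && (c == b) then f [::] else 0).
Proof.
rewrite /dd /post rev_cons.
case Hz: (rev z) => [|c' r].
  have -> : z = [::] by rewrite -(revK z) Hz.
  by rewrite add0r.
have -> : (z == [::]) = false.
  by apply/negbTE/negP => /eqP E; move: Hz; rewrite E.
by rewrite /= rev_rcons addr0.
Qed.

Lemma dS_t s h : dd true (Sf s h) = scalef (qn h.+2) (Sf s h.+1).
Proof.
apply: functional_extensionality => z; rewrite dd_post /= andbF addr0.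
by rewrite dQ_t post_scale.
Qed.
Lemma dS_f0 s : dd false (Sf s 0) = delta F [::].
Proof.
apply: functional_extensionality => z; rewrite dd_post dQ_f0 post_zero /zerof add0r.
by rewrite /delta andbT eq_sym.
Qed.
Lemma dS_fS s h : dd false (Sf s h.+1) = scalef (s * qn h.+1) (Sf s h).
Proof.
apply: functional_extensionality => z; rewrite dd_post dQ_fS post_scale /=.
by case: (z == [::]); rewrite addr0.
Qed.

Lemma psum_cons a u : psum (a :: u) = lbar a + psum u.
Proof. by rewrite /psum big_cons. Qed.
Lemma psum_rcons u a : psum (rcons u a) = psum u + lbar a.
Proof. by rewrite /psum -cats1 big_cat big_seq1. Qed.

Lemma wt_psum u b : wt u b = psum u * (if b then 2 else -2).
Proof.
rewrite /wt /psum big_distrl; apply: eq_bigr => c _.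
by rewrite /lform /lbar; case: c; case: b.
Qed.

Definition supp (f : fn F) (P : int) := forall u, f u != 0 -> psum u = P.

Lemma KK_supp b (f : fn F) P : supp f P ->
  KK q b f = scalef (q ^ (P * (if b then 2 else -2))) f.
Proof.
move=> hs; apply: functional_extensionality => u; rewrite /KK /scalef.
have [->|nz] := eqVneq (f u) 0; first by rewrite !mulr0.
by rewrite wt_psum (hs u nz).
Qed.

Lemma supp_ind a p : supp (ind a p) (if p then lbar a else 0).
Proof.
move=> u; elim: u a p => [|c u IH] a p.
  by case: p => /=; [rewrite eqxx | move=> _; rewrite /psum big_nil].
rewrite ind_cons psum_cons; case E: (c == a); last by rewrite eqxx.
move/eqP: E => ->; move/IH => ->; case: a; case: p => /=; rewrite /lbar //.
Qed.

Lemma supp_Q s h : supp (Q s h) (- h%:Z).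
Proof.
move=> u; elim: u h => [|c u IH] h.
  by case: h => [|h] /=; [rewrite /psum big_nil | rewrite eqxx].
case: c => /=.
  move=> nz; rewrite psum_cons (IH h.+1); first by rewrite /lbar; lia.
  by apply: contraNneq nz => ->; rewrite mulr0.
case: h => [|h]; first by rewrite eqxx.
move=> nz; rewrite psum_cons (IH h); first by rewrite /lbar; lia.
by apply: contraNneq nz => ->; rewrite mulr0.
Qed.

Lemma supp_pre a (f : fn F) P : supp f P -> supp (pre a f) (lbar a + P).
Proof.
move=> hs [|c u] /=; first by rewrite eqxx.
case E: (c == a); last by rewrite eqxx.
by move/eqP: E => ->; move/hs => <-; rewrite psum_cons.
Qed.

Lemma supp_post b (f : fn F) P : supp f P -> supp (post b f) (P + lbar b).
Proof.
move=> hs u; rewrite /post; case Hz: (rev u) => [|c r]; first by rewrite eqxx.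
case E: (c == b); last by rewrite eqxx.
have -> : u = rcons (rev r) c by rewrite -rev_cons -Hz revK.
by move/eqP: E => E; move/hs => <-; rewrite psum_rcons E.
Qed.

Lemma scalef1 (f : fn F) : scalef 1 f = f.
Proof. by apply: functional_extensionality => u; rewrite /scalef mul1r. Qed.

Lemma KK_A b : KK q b Af = Af.
Proof. by rewrite (KK_supp _ (@supp_ind true false)) mul0r expr0z scalef1. Qed.

Lemma KK_Wp_t : KK q true Wpf = scalef (q * q)^-1 Wpf.
Proof.
rewrite (KK_supp _ (@supp_ind false true)) /lbar /=.
by rewrite (_ : (-1 * 2)%R = - (2%N%:Z)) // -exprnN expr2.
Qed.
Lemma KK_Wp_f : KK q false Wpf = scalef (q * q) Wpf.
Proof.
rewrite (KK_supp _ (@supp_ind false true)) /lbar /=.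
by rewrite (_ : (-1 * -2)%R = (2%N%:Z)) // expr2.
Qed.

Lemma KK_Q_t s h : KK q true (Q s h) = scalef (q ^+ h * q ^+ h)^-1 (Q s h).
Proof.
rewrite (KK_supp _ (@supp_Q s h)).
rewrite (_ : (- h%:Z * 2)%R = - ((h + h)%N%:Z)); last by lia.
by rewrite -exprnN exprD.
Qed.
Lemma KK_Q_f s h : KK q false (Q s h) = scalef (q ^+ h * q ^+ h) (Q s h).
Proof.
rewrite (KK_supp _ (@supp_Q s h)).
rewrite (_ : (- h%:Z * -2)%R = ((h + h)%N%:Z)); last by lia.
by rewrite -exprnP exprD.
Qed.

Lemma KK_PQ_t s : KK q true (pre true (Q s 0)) = scalef (q * q) (pre true (Q s 0)).
Proof.
rewrite (KK_supp _ (@supp_pre true _ _ (@supp_Q s 0))) /lbar /=.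
by rewrite (_ : ((1 + - 0%:Z) * 2)%R = (2%N%:Z)) // expr2.
Qed.
Lemma KK_PQ_f s : KK q false (pre true (Q s 0)) = scalef (q * q)^-1 (pre true (Q s 0)).
Proof.
rewrite (KK_supp _ (@supp_pre true _ _ (@supp_Q s 0))) /lbar /=.
by rewrite (_ : ((1 + - 0%:Z) * -2)%R = - (2%N%:Z)) // -exprnN expr2.
Qed.

Lemma KK_S_t s h : KK q true (Sf s h) = scalef (q ^+ h.+1 * q ^+ h.+1)^-1 (Sf s h).
Proof.
rewrite (KK_supp _ (@supp_post false _ _ (@supp_Q s h))) /lbar.
rewrite (_ : ((- h%:Z + -1) * 2)%R = - ((h.+1 + h.+1)%N%:Z)); last by lia.
by rewrite -exprnN exprD.
Qed.
Lemma KK_S_f s h : KK q false (Sf s h) = scalef (q ^+ h.+1 * q ^+ h.+1) (Sf s h).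
Proof.
rewrite (KK_supp _ (@supp_post false _ _ (@supp_Q s h))) /lbar.
rewrite (_ : ((- h%:Z + -1) * -2)%R = ((h.+1 + h.+1)%N%:Z)); last by lia.
by rewrite -exprnP exprD.
Qed.

End Fam.

Section Fams.
Variable F : fieldType.
Variable q : F.
Hypothesis hq0 : q != 0.
Hypothesis hqq : q * q - 1 != 0.

Lemma dA_t : dd true (Af F) = Wpf F. Proof. by rewrite /Af dd_ind. Qed.
Lemma dA_f : dd false (Af F) = zerof F. Proof. by rewrite /Af dd_ind. Qed.
Lemma dWp_t : dd true (Wpf F) = zerof F. Proof. by rewrite /Wpf dd_ind. Qed.
Lemma dWp_f : dd false (Wpf F) = Af F. Proof. by rewrite /Wpf dd_ind. Qed.
Lemma Wn_t w : Wnf F (true :: w) = Bf F w. Proof. by rewrite /Wnf ind_cons. Qed.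
Lemma Wn_f w : Wnf F (false :: w) = 0. Proof. by rewrite /Wnf ind_cons. Qed.
Lemma Bf_t w : Bf F (true :: w) = 0. Proof. by rewrite /Bf ind_cons. Qed.
Lemma Bf_f w : Bf F (false :: w) = Wnf F w. Proof. by rewrite /Bf ind_cons. Qed.
Lemma Wp_t w : Wpf F (true :: w) = 0. Proof. by rewrite /Wpf ind_cons. Qed.
Lemma Wp_f w : Wpf F (false :: w) = Af F w. Proof. by rewrite /Wpf ind_cons. Qed.

Lemma solve_mul (a X Y : F) : a != 0 -> a * X = Y -> X = Y / a.
Proof. by move=> a0 <-; rewrite mulrC mulKf. Qed.

Lemma nq0 : - q != 0. Proof. by rewrite oppr_eq0. Qed.

Ltac fin := rewrite ?qnE ?exprS ?expr0; field; rewrite ?oppr_eq0 ?hq0 ?hqq ?oner_eq0 ?expf_eq0 ?(negbTE hq0) ?andbF //=.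

Lemma fam1 w :
  [/\ sh q w (pre true (Q q (- q) 0)) (Af F) = Wnf F w,
      sh q w (Q q (- q) 0) (Af F) + q * q * sh q w (pre true (Q q (- q) 0)) (Wpf F) = Bf F w
    & forall h, q ^+ h * sh q w (Q q (- q) h.+1) (Af F) = - q * sh q w (Q q (- q) h) (Wpf F)].
Proof.
elim: w => [|c w [IH1 IH2 IH3]].
  by split => [||h] /=; rewrite /Af /Wnf /Bf /Wpf /ind /=; ring.
case: c.
  split => [||h].
  - by rewrite sh_cons dd_pre_same KK_PQ_t shZl dA_t Wn_t.
  - rewrite !sh_cons dQ_t KK_Q_t dA_t dd_pre_same dWp_t sh0r !shZl Bf_t.
    move: (IH3 0); rewrite expr0 mul1r => ->; fin.
  - rewrite !sh_cons dQ_t KK_Q_t dA_t dWp_t sh0r !shZl.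
    have ht := expf_neq0 h hq0.
    rewrite (solve_mul (expf_neq0 h.+1 hq0) (IH3 h.+1)); fin.
split => [||h].
- by rewrite sh_cons (dd_pre_diff _ (isT : false != true)) dA_f sh0l sh0r Wn_f addr0.
- rewrite !sh_cons dQ_f0 dA_f sh0l sh0r (dd_pre_diff _ (isT : false != true)) KK_PQ_f dWp_f.
  rewrite sh0l shZl Bf_f IH1; fin.
- rewrite !sh_cons dQ_fS dA_f sh0r KK_Q_f dWp_f !shZl.
  case: h => [|h]; first by rewrite dQ_f0 sh0l; fin.
  have ht := expf_neq0 h hq0.
  rewrite dQ_fS shZl (solve_mul nq0 (esym (IH3 h))); fin.
Qed.


Lemma lin (l G1 G2 H1 H2 : F) : H1 = H2 -> G1 - G2 = l * (H1 - H2) -> G1 = G2.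
Proof. by move=> ->; rewrite subrr mulr0 => /eqP; rewrite subr_eq0 => /eqP. Qed.

Definition sm := - q^-1.

Lemma fam2 w :
  [/\ sh q w (Af F) (pre true (Q q sm 0)) = Wnf F w,
      sh q w (Wpf F) (pre true (Q q sm 0)) + sh q w (Af F) (Q q sm 0) = Bf F w
    & forall h, sh q w (Wpf F) (Q q sm h) + q ^+ h.+1 * sh q w (Af F) (Q q sm h.+1) = 0].
Proof.
elim: w => [|c w [IH1 IH2 IH3]].
  by split => [||h] /=; rewrite /Af /Wnf /Bf /Wpf /ind /=; ring.
case: c.
  split => [||h].
  - by rewrite sh_cons dA_t KK_A dd_pre_same Wn_t.
  - rewrite !sh_cons dWp_t KK_Wp_t dd_pre_same dA_t KK_A dQ_t sh0l !shZl !shZr Bf_t.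
    apply: (lin (l := qn q 2 / q) (IH3 0)); rewrite /sm; fin.
  - rewrite !sh_cons dWp_t KK_Wp_t dQ_t dA_t KK_A sh0l !shZl !shZr.
    have ht := expf_neq0 h hq0.
    apply: (lin (l := qn q h.+3 / q) (IH3 h.+1)); rewrite /sm; fin.
split => [||h].
- by rewrite sh_cons dA_f KK_A (dd_pre_diff _ (isT : false != true)) sh0l sh0r Wn_f addr0.
- rewrite !sh_cons dWp_f KK_Wp_f (dd_pre_diff _ (isT : false != true)) dA_f KK_A dQ_f0.
  by rewrite sh0l !sh0r IH1 Bf_f !addr0.
- rewrite !sh_cons dWp_f KK_Wp_f dA_f KK_A dQ_fS sh0l !shZl !shZr.
  case: h => [|h]; first by rewrite dQ_f0 sh0r /sm; fin.
  have ht := expf_neq0 h hq0.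
  rewrite dQ_fS shZr.
  apply: (lin (l := q * q * sm * qn q h.+1) (IH3 h)); rewrite /sm; fin.
Qed.

Lemma fam3 w :
  [/\ sh q w (Af F) (Sf q (- q) 0) = Wpf F w
    & forall h, qn q h.+2 * q ^+ h * sh q w (Af F) (Sf q (- q) h.+1)
                = - (qn q h.+1 * sh q w (Wpf F) (Sf q (- q) h))].
Proof.
elim: w => [|c w [IH1 IH3]].
  split => [|h] /=; rewrite /Af /Wpf /Sf /post /ind /=; ring.
case: c.
  split => [|h].
  - rewrite sh_cons dA_t KK_A dS_t shZr Wp_t.
    apply: (lin (l := 1) (IH3 0)); fin.
  - rewrite !sh_cons dA_t KK_A dS_t dWp_t KK_Wp_t dS_t sh0l !shZl !shZr.
    have ht := expf_neq0 h hq0.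
    apply: (lin (l := qn q h.+2 / q) (IH3 h.+1)); fin.
split => [|h].
- by rewrite sh_cons dA_f KK_A dS_f0 sh0l sh_delta0_r add0r Wp_f.
- rewrite !sh_cons dA_f KK_A dS_fS dWp_f KK_Wp_f sh0l !shZl !shZr.
  case: h => [|h]; first by rewrite dS_f0 sh_delta0_r IH1; fin.
  have ht := expf_neq0 h hq0.
  rewrite dS_fS shZr.
  apply: (lin (l := qn q h.+2 * (q * q) * (- q)) (IH3 h)); fin.
Qed.

Lemma fam4 w :
  [/\ sh q w (Sf q sm 0) (Af F) = Wpf F w
    & forall h, qn q h.+2 * q ^+ h.+2 * sh q w (Sf q sm h.+1) (Af F)
                + qn q h.+1 * sh q w (Sf q sm h) (Wpf F) = 0].
Proof.
elim: w => [|c w [IH1 IH3]].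
  split => [|h] /=; rewrite /Af /Wpf /Sf /post /ind /=; ring.
case: c.
  split => [|h].
  - rewrite sh_cons dS_t KK_S_t dA_t !shZl Wp_t.
    apply: (lin (l := (q * q)^-1) (IH3 0)); rewrite /sm; fin.
  - rewrite !sh_cons !dS_t KK_S_t dA_t dWp_t sh0r !shZl.
    have ht := expf_neq0 h hq0.
    apply: (lin (l := qn q h.+2 / q) (IH3 h.+1)); rewrite /sm; fin.
split => [|h].
- by rewrite sh_cons dS_f0 KK_S_f dA_f sh0r sh_delta0_l addr0 Wp_f.
- rewrite !sh_cons dS_fS !KK_S_f dA_f dWp_f sh0r !shZl.
  case: h => [|h]; first by rewrite dS_f0 sh_delta0_l IH1 /sm; fin.
  have ht := expf_neq0 h hq0.
  rewrite dS_fS shZl.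
  apply: (lin (l := qn q h.+2 * sm) (IH3 h)); rewrite /sm; fin.
Qed.

End Fams.

Section Grad.
Variable F : fieldType.
Variable q : F.

Definition restr (k : nat) (f : fn F) : fn F := fun u => if size u == k then f u else 0.
Definition sized (f : fn F) (a : nat) := forall u, f u != 0 -> size u = a.

Lemma loc w (f1 f2 g1 g2 : fn F) :
  (forall u, (size u <= size w)%N -> f1 u = f2 u) ->
  (forall u, (size u <= size w)%N -> g1 u = g2 u) ->
  sh q w f1 g1 = sh q w f2 g2.
Proof.
elim: w f1 f2 g1 g2 => [|c w IH] f1 f2 g1 g2 hf hg /=.
  by rewrite hf // hg.
congr (_ + _); apply: IH => u hu; rewrite /dd /KK ?hf ?hg //=; exact: leq_trans hu _.
Qed.

Lemma dd_restrS c k (g : fn F) : dd c (restr k.+1 g) = restr k (dd c g).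
Proof. by apply: functional_extensionality => u; rewrite /dd /restr /=. Qed.
Lemma dd_restr0 c (g : fn F) : dd c (restr 0 g) = zerof F.
Proof. by apply: functional_extensionality => u; rewrite /dd /restr /=. Qed.
Lemma KK_restr c k (g : fn F) : KK q c (restr k g) = restr k (KK q c g).
Proof.
apply: functional_extensionality => u; rewrite /KK /restr.
by case: (size u == k); rewrite ?mulr0.
Qed.

Lemma sized_dd c0 (f : fn F) a : sized f a -> sized (dd c0 f) a.-1.
Proof. by move=> hf u /hf /= <-. Qed.
Lemma sized_KK c0 (f : fn F) a : sized f a -> sized (KK q c0 f) a.
Proof.
move=> hf u; rewrite /KK => nz; apply: hf.
by apply: contraNneq nz => ->; rewrite mulr0.
Qed.
Lemma sized_dd0 c0 (f : fn F) : sized f 0 -> dd c0 f = zerof F.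
Proof.
move=> hf; apply: functional_extensionality => u; rewrite /dd /zerof.
by apply/eqP; apply: contraT => /hf.
Qed.

Lemma Grad_l w (f g : fn F) a : sized f a ->
  sh q w f g = if (a <= size w)%N then sh q w f (restr (size w - a) g) else 0.
Proof.
elim: w f g a => [|c w IH] f g a hf.
  case: a hf => [|a] hf; first by rewrite /= /restr.
  have e : f [::] = 0 by apply/eqP; apply: contraT => /hf.
  by rewrite /= e mul0r.
rewrite !sh_cons.
case: a hf => [|a] hf.
  rewrite (sized_dd0 c hf) !sh0l !add0r (IH _ _ _ (sized_KK (c0:=c) hf)) /= subn0.
  by rewrite subn0 dd_restrS.
rewrite (IH _ _ _ (sized_dd (c0:=c) hf)) (IH _ _ _ (sized_KK (c0:=c) hf)) /=.
rewrite ltnS subSS.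
case: (ltngtP a (size w)) => h.
- have -> : (size w - a = (size w - a.+1).+1)%N by rewrite subnSK.
  by rewrite dd_restrS.
- by rewrite addr0.
- by rewrite h subnn dd_restr0 sh0r.
Qed.

Lemma Grad_r w (f g : fn F) b : sized g b ->
  sh q w f g = if (b <= size w)%N then sh q w (restr (size w - b) f) g else 0.
Proof.
elim: w f g b => [|c w IH] f g b hg.
  case: b hg => [|b] hg; first by rewrite /= /restr.
  have e : g [::] = 0 by apply/eqP; apply: contraT => /hg.
  by rewrite /= e mulr0.
rewrite !sh_cons.
case: b hg => [|b] hg.
  rewrite (sized_dd0 c hg) !sh0r !addr0 (IH _ _ _ hg) /= subn0.
  by rewrite subn0 dd_restrS.
rewrite (IH _ _ _ hg) (IH _ _ _ (sized_dd (c0:=c) hg)) /=.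
rewrite ltnS subSS KK_restr.
case: (ltngtP b (size w)) => h.
- have -> : (size w - b = (size w - b.+1).+1)%N by rewrite subnSK.
  by rewrite dd_restrS.
- by rewrite addr0.
- by rewrite h subnn dd_restr0 sh0l.
Qed.

End Grad.

Lemma words_S m : words m.+1 = [seq true :: w | w <- words m] ++ [seq false :: w | w <- words m].
Proof. by rewrite /= cats0. Qed.

Lemma mem_words m u : (u \in words m) = (size u == m).
Proof.
elim: m u => [|m IH] u; first by case: u.
rewrite words_S mem_cat; case: u => [|c u] /=.
  by apply/negbTE; rewrite negb_or; apply/andP; split; apply/mapP => -[].
case: c.
  rewrite (mem_map (fun a b (e : true :: a = true :: b) => congr1 behead e)) IH.
  by rewrite eqSS; case: (size u == m) => //=; apply/negbTE/mapP => -[].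
rewrite (mem_map (fun a b (e : false :: a = false :: b) => congr1 behead e)) IH.
by rewrite eqSS orbC; case: (size u == m) => //=; apply/negbTE/mapP => -[].
Qed.

Lemma uniq_words m : uniq (words m).
Proof.
elim: m => [|m IH] //; rewrite words_S cat_uniq.
rewrite !map_inj_uniq ?IH //; try by move=> a b [].
rewrite andbT /=; apply/hasPn => u /mapP [v _ ->]; by apply/negP => /mapP [x _].
Qed.

Section Cat2.
Variable F : fieldType.
Variable q : F.

Lemma vcoef_Cn i u :
  vcoef (Cn q i) u = if (size u == 2 * i)%N && catalan u then catcoef q u else 0.
Proof.
rewrite /vcoef /Cn big_map big_filter big_mkcond /=.
case Hu: (u \in words (2 * i)).
  rewrite (bigD1_seq u Hu (uniq_words _)) /= eqxx -(mem_words) Hu /=.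
  rewrite big1 ?addr0; first by case: (catalan u).
  by move=> v /negbTE ->; case: (catalan v).
rewrite -mem_words Hu /= big_seq big1 // => v vin.
have -> : (v == u) = false by apply/negbTE; apply: contraFneq Hu => <-.
by case: (catalan v).
Qed.


Definition cond (H : int) (u : word) : bool :=
  all (fun j => 0 <= H + psum (take j u)) (iota 0 (size u)) && (H + psum u == 0).
Definition CF (s : F) (H : int) (u : word) : F :=
  if cond H u then s ^+ count negb u * \prod_(j < size u) qint q (1 + H + psum (take j.+1 u))
  else 0.

Lemma psum_nil : psum [::] = 0. Proof. by rewrite /psum big_nil. Qed.

Lemma cond_cons H a u : cond H (a :: u) = (0 <= H) && cond (H + lbar a) u.
Proof.
rewrite /cond /= psum_nil addr0 -andbA; congr (_ && _).
rewrite psum_cons addrA; congr (_ && _).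
rewrite (_ : iota 1 (size u) = map (addn 1) (iota 0 (size u))); last by rewrite -iotaDl.
rewrite all_map; apply: eq_all => j /=.
by rewrite add0n psum_cons addrA.
Qed.

Lemma cond_neg H u : H < 0 -> cond H u = false.
Proof.
move=> hn; case: u => [|a u].
  by rewrite /cond /= psum_nil addr0; apply/negbTE; rewrite (ltr0_neq0 hn).
by rewrite cond_cons leNgt hn.
Qed.

Lemma Q_t s h u : Q q s h (true :: u) = qn q h.+2 * Q q s h.+1 u. Proof. by []. Qed.
Lemma Q_f0 s u : Q q s 0 (false :: u) = 0. Proof. by []. Qed.
Lemma Q_fS s h u : Q q s h.+1 (false :: u) = s * qn q h.+1 * Q q s h u. Proof. by []. Qed.

Lemma prod_cons H a u :
  \prod_(j < size (a :: u)) qint q (1 + H + psum (take j.+1 (a :: u))) =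
  qint q (1 + H + lbar a) * \prod_(j < size u) qint q (1 + (H + lbar a) + psum (take j.+1 u)).
Proof.
rewrite big_ord_recl; congr (_ * _).
  by rewrite /= take0 psum_cons psum_nil addr0.
by apply: eq_bigr => j _; rewrite /= psum_cons !addrA.
Qed.

Lemma Q_CF s h u : Q q s h u = CF s h%:Z u.
Proof.
elim: u h => [|a u IH] h.
  rewrite /CF /cond /= psum_nil addr0 big_ord0 expr0 mulr1.
  by case: h.
rewrite /CF cond_cons prod_cons.
case: a.
  rewrite Q_t IH /CF.
  have -> : (h%:Z + lbar true) = h.+1%:Z by rewrite /lbar; lia.
  have -> : count negb (true :: u) = count negb u by [].
  rewrite le0z_nat; case: (cond _ u); last by rewrite mulr0.
  rewrite /qn (_ : (1 + h%:Z + lbar true) = h.+2%:Z); last by rewrite /lbar; lia.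
  by rewrite mulrCA.
case: h => [|h].
  by rewrite Q_f0 le0z_nat cond_neg.
rewrite Q_fS IH /CF.
have -> : ((h.+1)%:Z + lbar false) = h%:Z by rewrite /lbar; lia.
have -> : count negb (false :: u) = (count negb u).+1 by [].
rewrite le0z_nat; case: (cond _ u); last by rewrite !mulr0.
rewrite /qn (_ : (1 + h.+1%:Z + lbar false) = h.+1%:Z); last by rewrite /lbar; lia.
by rewrite exprS; ring.
Qed.

Lemma catalan_cond u : catalan u = cond 0 u.
Proof.
rewrite /catalan /cond add0r; congr (_ && _).
case: u => [|a u] //=.
rewrite psum_nil add0r lexx /=.
by apply: eq_all => j; rewrite add0r.
Qed.

Lemma qint1 : q != 0 -> q * q - 1 != 0 -> qint q 1 = 1.
Proof.
move=> hq0 hqq; rewrite /qint expr1z (_ : (- 1 : int) = - (1%N%:Z)) // -exprnN expr1.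
apply: divff.
have -> : q - q^-1 = (q * q - 1) / q by field.
by rewrite mulf_neq0 // invr_neq0.
Qed.

Lemma catcoef_CF u : q != 0 -> q * q - 1 != 0 ->
  catcoef q u = \prod_(j < size u) qint q (1 + 0%:Z + psum (take j.+1 u)).
Proof.
move=> hq0 hqq; rewrite /catcoef big_ord_recl take0 psum_nil addr0 qint1 // mul1r.
by apply: eq_bigr.
Qed.

Lemma psum_count u : psum u = (count id u)%:Z - (count negb u)%:Z.
Proof.
elim: u => [|a u IH]; first by rewrite psum_nil.
rewrite psum_cons IH; case: a => /=; rewrite /lbar; lia.
Qed.

Lemma count_id_negb u : (count id u + count negb u)%N = size u.
Proof. by elim: u => [|a u IH] //=; case: a => /=; lia. Qed.

Lemma vcoef_Cn_sized i u : vcoef (Cn q i) u != 0 -> size u = (2 * i)%N.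
Proof. rewrite vcoef_Cn; case E: (size u == (2*i)%N); first by move=> _; apply/eqP. by rewrite /= eqxx. Qed.
Lemma Q0_Cn s i u : q != 0 -> q * q - 1 != 0 -> size u = (2 * i)%N ->
  Q q s 0 u = s ^+ i * vcoef (Cn q i) u.
Proof.
move=> hq0 hqq hs; rewrite Q_CF vcoef_Cn /CF -catalan_cond hs eqxx /=.
case E: (catalan u); last by rewrite mulr0.
rewrite catcoef_CF //; congr (_ ^+ _ * _); last by rewrite hs.
move: E; rewrite /catalan => /andP [_ /eqP]; rewrite psum_count => h.
  have := count_id_negb u; rewrite hs; lia.
Qed.

Lemma Q_parity s h u : Q q s h u != 0 -> odd (size u) = odd h.
Proof.
elim: u h => [|a u IH] h.
  by case: h => //= ; rewrite eqxx.
case: a.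
  rewrite Q_t => nz; rewrite /= (IH h.+1) /=; first by rewrite negbK.
  by apply: contraNneq nz => ->; rewrite mulr0.
case: h => [|h]; first by rewrite Q_f0 eqxx.
rewrite Q_fS => nz; rewrite /= (IH h) //.
by apply: contraNneq nz => ->; rewrite mulr0.
Qed.

End Cat2.

Section Asm.
Variable F : fieldType.
Variable q : F.

Definition fa (a : bool) (i : nat) : bool := if a then ~~ odd i else odd i.

Lemma map_iotaS (f : nat -> bool) m n :
  map f (iota m.+1 n) = map (fun i => f i.+1) (iota m n).
Proof. by elim: n m => [|n IH] m //=; rewrite IH. Qed.

Lemma mkseqS0 (f : nat -> bool) n : mkseq f n.+1 = f 0%N :: mkseq (fun i => f i.+1) n.
Proof. by rewrite /mkseq /= map_iotaS. Qed.

Lemma altb_mk a u : altb a u = (u == mkseq (fa a) (size u)).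
Proof.
elim: u a => [|c u IH] a //=.
rewrite mkseqS0 eqseq_cons IH.
have -> : fa a 0 = a by case: a.
congr (_ && (_ == _)); apply: eq_mkseq => i.
by rewrite /fa; case: a => //=; rewrite negbK.
Qed.

Lemma ind_delta a p u :
  ind F a p u = if odd (size u) == p then delta F (mkseq (fa a) (size u)) u else 0.
Proof.
rewrite /ind altb_mk /delta eq_sym.
by case: (_ == _); case: (_ == _).
Qed.

Lemma restr_delta k u : restr k (delta F u) = if k == size u then delta F u else zerof F.
Proof.
apply: functional_extensionality => z; rewrite /restr /delta.
have [<-|ne] := eqVneq u z.
  by rewrite eq_sym; case: (k == size u) => /=; rewrite ?eqxx.
by case: (k == size u); rewrite /zerof ?(negbTE ne); case: ifP.
Qed.

Lemma restrA_delta m : restr (2 * m) (Af F) = delta F (Gt m).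
Proof.
apply: functional_extensionality => u; rewrite /restr /Af ind_delta.
case: eqP => [->|ne].
  by rewrite oddM andFb eqxx.
rewrite /delta; case: eqP => // E; case: ne; rewrite -E /Gt size_mkseq //.
Qed.

Lemma sized_restr k (f : fn F) : sized (restr k f) k.
Proof. by move=> u; rewrite /restr; case: ifP => [/eqP -> | _]; rewrite ?eqxx. Qed.

Lemma sized_delta u : sized (delta F u) (size u).
Proof. by move=> z; rewrite /delta; case: ifP => [/eqP -> | _]; rewrite ?eqxx. Qed.

Lemma sized_pre a (f : fn F) k : sized f k -> sized (pre a f) k.+1.
Proof.
move=> hf [|c u] /=; first by rewrite eqxx.
by case: (c == a); [move/hf => -> | rewrite eqxx].
Qed.

Lemma sized_post b (f : fn F) k : sized f k -> sized (post b f) k.+1.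
Proof.
move=> hf u; rewrite /post; case Hz: (rev u) => [|c r]; first by rewrite eqxx.
case: (c == b); last by rewrite eqxx.
move/hf => e; rewrite -(revK u) Hz /= size_rev in e *.
by rewrite size_rev /= e.
Qed.

Lemma part (f : fn F) n u : (forall u, f u != 0 -> odd (size u)) ->
  (size u <= (2 * n).+1)%N -> f u = \sum_(i < n.+1) restr (2 * i).+1 f u.
Proof.
move=> hp hs; rewrite /restr.
have [z|nz] := eqVneq (f u) 0.
  by rewrite z big1 // => i _; case: ifP.
have ho := hp u nz.
have [j hj] : exists j, size u = (2 * j).+1.
  exists (size u)./2; rewrite -[LHS]odd_double_half ho add1n -muln2 mulnC //.
have hjn : (j < n.+1)%N by lia.
rewrite (bigD1 (Ordinal hjn)) //= hj eqxx.
rewrite big1 ?addr0 // => i ne; case: eqP => // E.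
case/eqP: ne; apply: val_inj => /=; lia.
Qed.

Lemma Gt_size m : size (Gt m) = (2 * m)%N. Proof. by rewrite size_mkseq. Qed.

Lemma assemble_l (P : fn F) (Ci : nat -> fn F) (c : nat -> F) (M : fn F) (T : word) n :
  (forall i, restr (2 * i).+1 P = scalef (c i) (Ci i)) ->
  (forall i, sized (Ci i) (2 * i).+1) ->
  (forall u, P u != 0 -> odd (size u)) ->
  (forall w, sh q w P (Af F) = M w) ->
  (forall w, size w = (2 * n).+1 -> M w = delta F T w) ->
  size T = (2 * n).+1 ->
  forall w, delta F T w = \sum_(i < n.+1) c i * sh q w (Ci i) (delta F (Gt (n - i))).
Proof.
move=> hr hs hp hM hT sT w.
case: (size w =P (2 * n).+1) => sw.
  rewrite -hT // -hM.
  rewrite (@loc _ q w P (fun u => \sum_(i < n.+1) restr (2 * i).+1 P u) (Af F) (Af F)); last by [].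
    rewrite sh_suml; apply: eq_bigr => i _.
    rewrite (Grad_l _ _ _ (@sized_restr _ _)) sw.
    have hi := ltn_ord i.
    have -> : ((2 * i).+1 <= (2 * n).+1)%N by lia.
    rewrite (_ : ((2 * n).+1 - (2 * i).+1 = 2 * (n - i))%N); last by lia.
    by rewrite restrA_delta hr shZl.
  by move=> u; rewrite sw => /(part hp).
rewrite {1}/delta (_ : (T == w) = false); last first.
  by apply/negbTE; apply: contra_not_neq sw => <-.
rewrite big1 // => i _.
rewrite (Grad_l _ _ _ (hs i)); case: ifP => h; last by rewrite mulr0.
rewrite restr_delta Gt_size.
have hi := ltn_ord i.
rewrite (_ : (size w - (2 * i).+1 == 2 * (n - i))%N = false) ?sh0r ?mulr0 //.
by apply/negbTE/eqP => E; apply: sw; lia.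
Qed.

Lemma assemble_r (P : fn F) (Ci : nat -> fn F) (c : nat -> F) (M : fn F) (T : word) n :
  (forall i, restr (2 * i).+1 P = scalef (c i) (Ci i)) ->
  (forall i, sized (Ci i) (2 * i).+1) ->
  (forall u, P u != 0 -> odd (size u)) ->
  (forall w, sh q w (Af F) P = M w) ->
  (forall w, size w = (2 * n).+1 -> M w = delta F T w) ->
  size T = (2 * n).+1 ->
  forall w, delta F T w = \sum_(i < n.+1) c i * sh q w (delta F (Gt (n - i))) (Ci i).
Proof.
move=> hr hs hp hM hT sT w.
case: (size w =P (2 * n).+1) => sw.
  rewrite -hT // -hM.
  rewrite (@loc _ q w (Af F) (Af F) P (fun u => \sum_(i < n.+1) restr (2 * i).+1 P u)) //; last first.
    by move=> u; rewrite sw => /(part hp).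
  rewrite sh_sumr; apply: eq_bigr => i _.
  rewrite (Grad_r _ _ _ (@sized_restr _ _)) sw.
  have hi := ltn_ord i.
  have -> : ((2 * i).+1 <= (2 * n).+1)%N by lia.
  rewrite (_ : ((2 * n).+1 - (2 * i).+1 = 2 * (n - i))%N); last by lia.
  by rewrite restrA_delta hr shZr.
rewrite {1}/delta (_ : (T == w) = false); last first.
  by apply/negbTE; apply: contra_not_neq sw => <-.
rewrite big1 // => i _.
rewrite (Grad_r _ _ _ (hs i)); case: ifP => h; last by rewrite mulr0.
rewrite restr_delta Gt_size.
have hi := ltn_ord i.
rewrite (_ : (size w - (2 * i).+1 == 2 * (n - i))%N = false) ?sh0l ?mulr0 //.
by apply/negbTE/eqP => E; apply: sw; lia.
Qed.

End Asm.

Section Fin.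
Variable F : fieldType.
Variable q : F.
Hypothesis hq0 : q != 0.
Hypothesis hqq : q * q - 1 != 0.

Lemma restr_pre s i :
  restr (2 * i).+1 (pre true (Q q s 0)) = scalef (s ^+ i) (pre true (vcoef (Cn q i))).
Proof.
apply: functional_extensionality => u; rewrite /restr /pre /scalef.
case: u => [|a u] /=; first by rewrite mulr0.
rewrite eqSS; case: ifP => [/eqP hs|hs].
  by case: (a == true); rewrite ?mulr0 // (Q0_Cn s hq0 hqq hs).
case: (a == true); rewrite ?mulr0 // vcoef_Cn hs /= mulr0 //.
Qed.

Lemma restr_post s i :
  restr (2 * i).+1 (post false (Q q s 0)) = scalef (s ^+ i) (post false (vcoef (Cn q i))).
Proof.
apply: functional_extensionality => u; rewrite /restr /post /scalef.
case Hz: (rev u) => [|c r]; first by rewrite mulr0; case: ifP.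
have su : size u = (size r).+1 by rewrite -size_rev Hz.
rewrite su eqSS; case: ifP => [/eqP hs|hs].
  have hs' : size (rev r) = (2 * i)%N by rewrite size_rev.
  by case: (c == false); rewrite ?mulr0 // (Q0_Cn s hq0 hqq hs').
case: (c == false); rewrite ?mulr0 // vcoef_Cn size_rev hs /= mulr0 //.
Qed.

Lemma odd_pre s u : pre true (Q q s 0) u != 0 -> odd (size u).
Proof.
case: u => [|a u] /=; first by rewrite eqxx.
case: (a == true); last by rewrite eqxx.
by move/Q_parity => ->.
Qed.

Lemma odd_post s u : post false (Q q s 0) u != 0 -> odd (size u).
Proof.
rewrite /post; case Hz: (rev u) => [|c r]; first by rewrite eqxx.
have su : size u = (size r).+1 by rewrite -size_rev Hz.
case: (c == false); last by rewrite eqxx.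
by move/Q_parity; rewrite su size_rev /= => ->.
Qed.

Lemma sized_preC i : sized (pre true (vcoef (Cn q i))) (2 * i).+1.
Proof. apply: sized_pre => u; exact: vcoef_Cn_sized. Qed.
Lemma sized_postC i : sized (post false (vcoef (Cn q i))) (2 * i).+1.
Proof. apply: sized_post => u; exact: vcoef_Cn_sized. Qed.

Lemma Wn_delta n w : size w = (2 * n).+1 -> Wnf F w = delta F (Wneg n) w.
Proof. by move=> sw; rewrite /Wnf ind_delta sw /= oddM andFb. Qed.
Lemma Wp_delta n w : size w = (2 * n).+1 -> Wpf F w = delta F (Wpos n) w.
Proof. by move=> sw; rewrite /Wpf ind_delta sw /= oddM andFb. Qed.

End Fin.

Unset Implicit Arguments.

Theorem theorem11p5 (F : fieldType) (q : F) (hq0 : q != 0)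
    (hq : forall m : nat, (0 < m)%N -> q ^+ m != 1) (n : nat) :
  let x : V F := vword F [:: true] in
  let y : V F := vword F [:: false] in
  let C := Cn q in
  let G k := vword F (Gt k) in
  [/\ veq (vword F (Wneg n))
          (vsum n.+1 (fun i => vscale ((-1) ^+ i * q ^+ i)
                                 (vshuffle q (vcat x (C i)) (G (n - i)%N)))),
      veq (vword F (Wneg n))
          (vsum n.+1 (fun i => vscale ((-1) ^+ i * q ^- i)
                                 (vshuffle q (G (n - i)%N) (vcat x (C i))))),
      veq (vword F (Wpos n))
          (vsum n.+1 (fun i => vscale ((-1) ^+ i * q ^+ i)
                                 (vshuffle q (G (n - i)%N) (vcat (C i) y))))
    & veq (vword F (Wpos n))
          (vsum n.+1 (fun i => vscale ((-1) ^+ i * q ^- i)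
                                 (vshuffle q (vcat (C i) y) (G (n - i)%N))))].
Proof.
cbv zeta.
have hqq : q * q - 1 != 0.
  by move: (hq 2%N isT); rewrite expr2; apply: contra; rewrite subr_eq0.
have sW : size (Wneg n) = (2 * n).+1 by rewrite size_mkseq.
have sP : size (Wpos n) = (2 * n).+1 by rewrite size_mkseq.
split => w; rewrite vcoef_vword vcoef_vsum.
- rewrite (assemble_l (q := q) (P := pre true (Q q (- q) 0))
            (Ci := fun i => pre true (vcoef (Cn q i))) (c := fun i => (-1) ^+ i * q ^+ i)
            (M := Wnf F) (T := Wneg n) (n := n)).
  + by apply: eq_bigr => i _; rewrite vcoef_scale vcoef_shuffle vcoef_vcat_l !vcoef_vword.
  + by move=> i; rewrite (@restr_pre _ _ hq0 hqq) [(- q) ^+ _]exprNn.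
  + exact: (@sized_preC F q).
  + exact: odd_pre.
  + by move=> z; case: (fam1 hq0 hqq z).
  + exact: Wn_delta.
  + exact: sW.
- rewrite (assemble_r (q := q) (P := pre true (Q q (sm q) 0))
            (Ci := fun i => pre true (vcoef (Cn q i))) (c := fun i => (-1) ^+ i * q ^- i)
            (M := Wnf F) (T := Wneg n) (n := n)).
  + by apply: eq_bigr => i _; rewrite vcoef_scale vcoef_shuffle vcoef_vcat_l !vcoef_vword.
  + by move=> i; rewrite (@restr_pre _ _ hq0 hqq) /sm [(- q^-1) ^+ _]exprNn exprVn.
  + exact: (@sized_preC F q).
  + exact: odd_pre.
  + by move=> z; case: (fam2 hq0 hqq z).
  + exact: Wn_delta.
  + exact: sW.
- rewrite (assemble_r (q := q) (P := post false (Q q (- q) 0))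
            (Ci := fun i => post false (vcoef (Cn q i))) (c := fun i => (-1) ^+ i * q ^+ i)
            (M := Wpf F) (T := Wpos n) (n := n)).
  + by apply: eq_bigr => i _; rewrite vcoef_scale vcoef_shuffle vcoef_vcat_r !vcoef_vword.
  + by move=> i; rewrite (@restr_post _ _ hq0 hqq) [(- q) ^+ _]exprNn.
  + exact: (@sized_postC F q).
  + exact: odd_post.
  + by move=> z; case: (fam3 hq0 hqq z).
  + exact: Wp_delta.
  + exact: sP.
- rewrite (assemble_l (q := q) (P := post false (Q q (sm q) 0))
            (Ci := fun i => post false (vcoef (Cn q i))) (c := fun i => (-1) ^+ i * q ^- i)
            (M := Wpf F) (T := Wpos n) (n := n)).
  + by apply: eq_bigr => i _; rewrite vcoef_scale vcoef_shuffle vcoef_vcat_r !vcoef_vword.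
  + by move=> i; rewrite (@restr_post _ _ hq0 hqq) /sm [(- q^-1) ^+ _]exprNn exprVn.
  + exact: (@sized_postC F q).
  + exact: odd_post.
  + by move=> z; case: (fam4 hq0 hqq z).
  + exact: Wp_delta.
  + exact: sP.
Qed.
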